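(* Let $\mathbf K$ be a commutative field, $p,q\in\mathbb N$, $A\in\mathbf K^{\mathcal M_{p\times q}}$, and $\mathcal A=\overline{A}^{rec}$. Then $$\dim\big(\overline{A}^{birec}\big)=\dim\big(\mathbf K[\rho_{\mathcal A}(\mathcal M_{p\times q})]\big),$$ where $\mathbf K[\rho_{\mathcal A}(\mathcal M_{p\times q})]\subset\mathrm{End}(\mathcal A)$ is the subalgebra generated by the restrictions to $\mathcal A$ of all shift maps. In particular $$\dim\big(\overline{A}^{rec}\big)\le\dim\big(\overline{A}^{birec}\big)\le\big(\dim\overline{A}^{rec}\big)^2$$ (dimensions in $\mathbb N\cup\{\infty\}$).
   Context: $\mathcal M_{p\times q}$ is the monoid of pairs $(U,W)$ of words of common length with $U$ over $\{0,\dots,p-1\}$ and $W$ over $\{0,\dots,q-1\}$, under concatenation. For $A:\mathcal M_{p\times q}\to\mathbf K$ (values $A[U,W]$), the (right) shift map is $(\rho(S,T)A)[U,W]=A[US,WT]$ and the left shift map is $(\lambda(s_1\dots s_n,t_1\dots t_n)A)[U,W]=A[s_n\dots s_1U,t_n\dots t_1W]$. The recursive closure $\overline{A}^{rec}$ is the linear span of $\{\rho(S,T)A\}$ (invariant under all shift maps), and the birecursive closure $\overline{A}^{birec}$ is the linear span of $\{\lambda(S',T')\rho(S,T)A:(S,T),(S',T')\in\mathcal M_{p\times q}\}$. *)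

(* Defs.v *)
From mathcomp Require Import all_boot all_order all_algebra.
Set Implicit Arguments. Unset Strict Implicit. Unset Printing Implicit Defensive.
Import GRing.Theory.
Local Open Scope ring_scope.

(* The monoid M_{p x q}: pairs (U,W) of words of common length. *)
Definition word2 (p q : nat) : Type :=
  {x : seq 'I_p * seq 'I_q | size x.1 == size x.2}.

Lemma wcat_proof p q (x y : word2 p q) :
  size ((sval x).1 ++ (sval y).1) == size ((sval x).2 ++ (sval y).2).
Proof.
by case: x => [[a b] /= /eqP Hx]; case: y => [[c d] /= /eqP Hy];
   rewrite !size_cat Hx Hy.
Qed.

Definition wcat p q (x y : word2 p q) : word2 p q :=
  exist _ ((sval x).1 ++ (sval y).1, (sval x).2 ++ (sval y).2) (wcat_proof x y).

Lemma wrev_proof p q (x : word2 p q) :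
  size (rev (sval x).1) == size (rev (sval x).2).
Proof. by case: x => [[a b] /= H]; rewrite !size_rev. Qed.

Definition wrev p q (x : word2 p q) : word2 p q :=
  exist _ (rev (sval x).1, rev (sval x).2) (wrev_proof x).

Definition series (K : fieldType) p q := word2 p q -> K.

Definition rho (K : fieldType) p q (w : word2 p q) (A : series K p q)
  : series K p q := fun u => A (wcat u w).

Definition lambda (K : fieldType) p q (w : word2 p q) (A : series K p q)
  : series K p q := fun u => A (wcat (wrev w) u).

(* Linear algebra in the K-vector space of all functions X -> K
   (pointwise operations). A "subspace" is given as a predicate. *)
Definition lincomb (K : fieldType) (X : Type) n (c : 'I_n -> K)
  (b : 'I_n -> X -> K) : X -> K := fun x => \sum_(i < n) c i * b i x.

Definition span (K : fieldType) (X : Type) (G : (X -> K) -> Prop)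
  : (X -> K) -> Prop :=
  fun v => exists n (c : 'I_n -> K) (b : 'I_n -> X -> K),
    (forall i, G (b i)) /\ v = lincomb c b.

(* [has_dim n V]: the subspace V has a basis of n elements, i.e. dim V = n.
   dim V = infinity iff has_dim n V holds for no n. *)
Definition has_dim (K : fieldType) (X : Type) (n : nat)
  (V : (X -> K) -> Prop) : Prop :=
  exists b : 'I_n -> X -> K,
    [/\ forall i, V (b i),
        (forall c : 'I_n -> K, lincomb c b = (fun _ => 0) -> forall i, c i = 0)
      & forall v, V v -> exists c : 'I_n -> K, v = lincomb c b].

Definition rec_closure (K : fieldType) p q (A : series K p q) : series K p q -> Prop :=
  span (fun f => exists w, f = rho w A).

Definition birec_closure (K : fieldType) p q (A : series K p q) : series K p q -> Prop :=
  span (fun f => exists w w', f = lambda w' (rho w A)).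

Definition recElt (K : fieldType) p q (A : series K p q) : Type :=
  {f : series K p q | rec_closure A f}.

(* A K-linear map calA -> calA is represented by its graph as a function
   calA -> series (values lie in calA for all maps considered below);
   uncurried, it is a function  recElt A * word2 p q -> K, so End(calA)
   sits inside the function space (recElt A * word2 p q) -> K. *)
(* The restriction to calA of the composite rho(w_1) o ... o rho(w_k)
   (empty list = identity of calA). *)
Definition rho_mono (K : fieldType) p q (A : series K p q) (ws : seq (word2 p q))
  : recElt A * word2 p q -> K :=
  fun au => foldr (@rho K p q) (sval au.1) ws au.2.
Arguments rho_mono {K p q} A ws _.

(* K[rho_calA(M_{p x q})]: the subalgebra of End(calA) generated by the
   restrictions of all shift maps = span of all finite products of them. *)
Definition shift_algebra (K : fieldType) p q (A : series K p q)
  : (recElt A * word2 p q -> K) -> Prop :=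
  span (fun g => exists ws, g = rho_mono A ws).

Arguments shift_algebra {K p q} A _.

(* Main.v *)
Require Import Defs.
From mathcomp Require Import all_boot all_order all_algebra.
From Stdlib Require Import FunctionalExtensionality ClassicalEpsilon Classical.
Set Implicit Arguments. Unset Strict Implicit. Unset Printing Implicit Defensive.
Import GRing.Theory.
Local Open Scope ring_scope.

Section Lin.
Variables (K : fieldType) (X : Type).

Definition indep n (b : 'I_n -> X -> K) :=
  forall c : 'I_n -> K, lincomb c b = (fun _ => 0) -> forall i, c i = 0.

Definition inspan m (f : 'I_m -> X -> K) (g : X -> K) := exists c, g = lincomb c f.

Lemma choice_fin (I : Type) (T : Type) (P : I -> T -> Prop) :
  (forall i, exists t, P i t) -> exists h : I -> T, forall i, P i (h i).
Proof.
move=> H; exists (fun i => proj1_sig (constructive_indefinite_description _ (H i))).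
by move=> i; case: (constructive_indefinite_description _ (H i)).
Qed.

Lemma inspan_comb m n (f : 'I_m -> X -> K) (b : 'I_n -> X -> K) c :
  (forall i, inspan f (b i)) -> inspan f (lincomb c b).
Proof.
move=> /choice_fin [d Hd].
exists (fun j => \sum_(i < n) c i * d i j).
apply: functional_extensionality => x; rewrite /lincomb.
under eq_bigr => i _ do rewrite (Hd i) /lincomb big_distrr.
rewrite exchange_big; apply: eq_bigr => j _; rewrite big_distrl; apply: eq_bigr => i _.
exact: mulrA.
Qed.

Lemma inspan_span m (f : 'I_m -> X -> K) (G : (X -> K) -> Prop) :
  (forall g, G g -> inspan f g) -> forall v, Defs.span G v -> inspan f v.
Proof.
move=> H v [n [c [b [Hb ->]]]]; apply: inspan_comb => i; exact: H.
Qed.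

Lemma steinitz n m (b : 'I_n -> X -> K) (f : 'I_m -> X -> K) :
  indep b -> (forall i, inspan f (b i)) -> (n <= m)%N.
Proof.
move=> Hind /choice_fin [C HC].
rewrite leqNgt; apply/negP => ltmn.
pose M : 'M[K]_(n, m) := \matrix_(i, j) C i j.
have nfree : ~~ row_free M.
  apply/negP => /eqP Hr; move: (rank_leq_col M); rewrite Hr => Hle.
  by move: (leq_trans ltmn Hle); rewrite ltnn.
have Kn0 : kermx M != 0 by rewrite kermx_eq0.
case: (pickP (fun r => row r (kermx M) != 0)) => [r Hr|Hnone]; last first.
  move/negP: Kn0; apply; apply/eqP/row_matrixP => r.
  by move: (Hnone r) => /= /negbFE /eqP ->; rewrite row0.
pose v := row r (kermx M).
have vM : v *m M = 0 by rewrite /v -row_mul mulmx_ker row0.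
have Hc : lincomb (fun i => v 0 i) b = (fun _ => 0).
  apply: functional_extensionality => x; rewrite /lincomb.
  under eq_bigr => i _ do rewrite (HC i) /lincomb big_distrr.
  rewrite exchange_big; apply: big1 => j _.
  transitivity ((v *m M) 0 j * f j x); last by rewrite vM mxE mul0r.
  rewrite mxE big_distrl; apply: eq_bigr => i _; rewrite /= [M i j]mxE; exact: mulrA.
move/negP: Hr; apply; apply/eqP/rowP => i.
rewrite [RHS]mxE; exact: Hind _ Hc i.
Qed.

Definition ext k (b : 'I_k -> X -> K) (g : X -> K) (i : 'I_k.+1) : X -> K :=
  if unlift ord_max i is Some j then b j else g.

Lemma widen_lift k (i : 'I_k) : widen_ord (leqnSn k) i = lift ord_max i.
Proof. by apply: val_inj; rewrite /= /bump leqNgt ltn_ord. Qed.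

Lemma ext_widen k (b : 'I_k -> X -> K) g i : ext b g (widen_ord (leqnSn k) i) = b i.
Proof. by rewrite /ext widen_lift liftK. Qed.

Lemma ext_max k (b : 'I_k -> X -> K) g : ext b g ord_max = g.
Proof. by rewrite /ext unlift_none. Qed.

Lemma ext_indep k (b : 'I_k -> X -> K) g : indep b -> ~ inspan b g -> indep (ext b g).
Proof.
move=> Hb Hg c Hc.
have Hc' x : \sum_(i < k) c (widen_ord (leqnSn k) i) * b i x + c ord_max * g x = 0.
  have := congr1 (fun h => h x) Hc; rewrite /lincomb /= big_ord_recr /= ext_max.
  by under eq_bigr => i _ do rewrite ext_widen.
have cmax : c ord_max = 0.
  case: (eqVneq (c ord_max) 0) => // Hne; exfalso; apply: Hg.
  exists (fun i => - c (widen_ord (leqnSn k) i) / c ord_max).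
  apply: functional_extensionality => x; rewrite /lincomb.
  have E : \sum_(i < k) c (widen_ord (leqnSn k) i) * b i x = - (c ord_max * g x).
    by apply/eqP; rewrite -addr_eq0; apply/eqP; apply: Hc'.
  under eq_bigr => i _ do rewrite mulrAC mulNr.
  by rewrite -big_distrl /= sumrN E opprK mulrAC mulfV ?mul1r.
have Hw : lincomb (fun i => c (widen_ord (leqnSn k) i)) b = (fun _ => 0).
  apply: functional_extensionality => x; have := Hc' x.
  by rewrite cmax mul0r addr0.
move=> i; case: (unliftP ord_max i) => [j ->|->] //.
by rewrite -widen_lift; exact: (Hb _ Hw j).
Qed.

Lemma L1 m (f : 'I_m -> X -> K) (G : (X -> K) -> Prop) :
  (forall g, G g -> inspan f g) ->
  exists n, (n <= m)%N /\ has_dim n (Defs.span G).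
Proof.
move=> HG.
suff aux : forall d k (b : 'I_k -> X -> K), (m - k <= d)%N ->
    (forall i, G (b i)) -> indep b ->
    exists n, (n <= m)%N /\ has_dim n (Defs.span G).
  apply: (aux m 0 (fun i => fun _ => 0)).
  - by rewrite subn0.
  - by case.
  - by move=> c _ [].
have step : forall k (b : 'I_k -> X -> K), (forall i, G (b i)) -> indep b ->
   (exists n, (n <= m)%N /\ has_dim n (Defs.span G)) \/
   exists b' : 'I_k.+1 -> X -> K, (forall i, G (b' i)) /\ indep b'.
  move=> k b HbG Hb.
  case: (classic (forall g, G g -> inspan b g)) => Hall.
    left; exists k; split; first by apply: (steinitz Hb) => i; apply: HG.
    exists b; split => //; last exact: inspan_span.
    move=> i; exists 1%N, (fun _ => 1), (fun _ => b i); split => //.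
    by apply: functional_extensionality => x; rewrite /lincomb big_ord1 mul1r.
  right; have [g Hg] := not_all_ex_not _ _ Hall.
  have [Gg ng] := imply_to_and _ _ Hg.
  exists (ext b g); split; last exact: ext_indep.
  by move=> i; rewrite /ext; case: (unlift _ i) => [j|].
elim=> [|d IH] k b Hd HbG Hb; case: (step k b HbG Hb) => // [[b' [Hb'G Hb']]].
  have := steinitz Hb' (fun i => HG _ (Hb'G i)).
  by move: Hd; rewrite leqn0 subn_eq0 => Hd; rewrite ltnNge Hd.
by apply: (IH _ b') => //; move: Hd; rewrite subnS; case: (m - k)%N.
Qed.

Lemma dim_uniq (V : (X -> K) -> Prop) n m : has_dim n V -> has_dim m V -> n = m.
Proof.
move=> [b [Vb Ib Sb]] [b' [Vb' Ib' Sb']]; apply/eqP; rewrite eqn_leq.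
apply/andP; split.
  by apply: (steinitz Ib) => i; apply: Sb'.
by apply: (steinitz Ib') => i; apply: Sb.
Qed.

Lemma transfer n (G G' : (X -> K) -> Prop) :
  has_dim n (Defs.span G) -> (forall g, G' g -> Defs.span G g) ->
  (forall g, G g -> Defs.span G' g) -> has_dim n (Defs.span G').
Proof.
move=> Hn H1 H2.
have Hn' := Hn; case: Hn' => [b [_ _ Sb]].
have [m [lemn Hm]] : exists m, (m <= n)%N /\ has_dim m (Defs.span G').
  by apply: (L1 (f:=b)) => g /H1; apply: Sb.
have Hm' := Hm; case: Hm' => [b' [_ _ Sb']].
have [m' [lem'm Hm'']] : exists m', (m' <= m)%N /\ has_dim m' (Defs.span G).
  by apply: (L1 (f:=b')) => g /H2; apply: Sb'.
have E := dim_uniq Hm'' Hn.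
have -> : n = m by apply/eqP; rewrite eqn_leq -{1}E lem'm lemn.
exact: Hm.
Qed.

End Lin.

Section Dual.
Variables (K : fieldType) (I J : Type) (F : I -> J -> K).

Lemma dual_le n :
  has_dim n (Defs.span (fun f => exists i, f = F i)) ->
  exists m, (m <= n)%N /\ has_dim m (Defs.span (fun g => exists j, g = fun i => F i j)).
Proof.
move=> [b [_ _ Sb]].
have [C HC] : exists C : I -> 'I_n -> K, forall i, F i = lincomb (C i) b.
  apply: (choice_fin (P := fun i c => F i = lincomb c b)) => i; apply: Sb.
  exists 1%N, (fun _ => 1), (fun _ => F i); split; first by move=> _; exists i.
  by apply: functional_extensionality => x; rewrite /lincomb big_ord1 mul1r.
apply: (L1 (f := fun k i => C i k)) => g [j ->].
exists (fun k => b k j); apply: functional_extensionality => i.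
rewrite HC /lincomb; apply: eq_bigr => k _; exact: mulrC.
Qed.

End Dual.

Lemma dual (K : fieldType) (I J : Type) (F : I -> J -> K) n :
  has_dim n (Defs.span (fun f => exists i, f = F i)) ->
  has_dim n (Defs.span (fun g => exists j, g = fun i => F i j)).
Proof.
move=> Hn; have [m [lemn Hm]] := dual_le Hn.
have [m' [lem'm Hm']] := @dual_le K J I (fun j i => F i j) _ Hm.
have E := dim_uniq Hm' Hn.
have -> : n = m by apply/eqP; rewrite eqn_leq -{1}E lem'm lemn.
exact: Hm.
Qed.


Section Words.
Variables p q : nat.
Definition wnil : word2 p q := exist _ ([::], [::]) isT.

Lemma word_eq (x y : word2 p q) : sval x = sval y -> x = y.
Proof.
case: x => [x Hx]; case: y => [y Hy] /= E; subst y.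
by congr exist; apply: bool_irrelevance.
Qed.

Lemma wcatA (x y z : word2 p q) : wcat (wcat x y) z = wcat x (wcat y z).
Proof. by apply: word_eq => /=; rewrite !catA. Qed.
Lemma wcatw0 (x : word2 p q) : wcat x wnil = x.
Proof. by apply: word_eq; case: x => [[a b] H] /=; rewrite !cats0. Qed.
Lemma wcat0w (x : word2 p q) : wcat wnil x = x.
Proof. by apply: word_eq; case: x => [[a b] H]. Qed.
Lemma wrevK (x : word2 p q) : wrev (wrev x) = x.
Proof. by apply: word_eq; case: x => [[a b] H] /=; rewrite !revK. Qed.
Lemma wrev0 : wrev wnil = wnil.
Proof. by apply: word_eq. Qed.

Definition wconcat (ws : seq (word2 p q)) := foldr (@wcat p q) wnil ws.

Lemma foldr_rho (K : fieldType) (a : series K p q) ws u :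
  foldr (@rho K p q) a ws u = a (wcat u (wconcat ws)).
Proof.
elim: ws u => [|w ws IH] u /=; first by rewrite wcatw0.
by rewrite /rho IH wcatA.
Qed.
End Words.

Lemma single (K : fieldType) (X : Type) (G : (X -> K) -> Prop) g : G g -> Defs.span G g.
Proof.
move=> Gg; exists 1%N, (fun _ => 1), (fun _ => g); split => //.
by apply: functional_extensionality => x; rewrite /lincomb big_ord1 mul1r.
Qed.

Lemma rec_rho (K : fieldType) p q (A : series K p q) u a :
  rec_closure A a -> rec_closure A (rho u a).
Proof.
move=> [n [c [b [Hb ->]]]].
exists n, c, (fun i => rho u (b i)); split => //.
move=> i; case: (Hb i) => x ->; exists (wcat u x).
apply: functional_extensionality => y; by rewrite /rho wcatA.
Qed.

Section Main.
Variables (K : fieldType) (p q : nat) (A : series K p q).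
Local Notation W := (word2 p q).

Definition BG := fun f : series K p q => exists w w', f = lambda w' (rho w A).
Definition C2g := fun f : series K p q =>
  exists ux : W * W, f = fun w => A (wcat (wcat ux.1 w) ux.2).
Definition F2 (w : W) (au : recElt A * W) : K := sval au.1 (wcat au.2 w).
Definition Rowg := fun f => exists w, f = F2 w.
Definition Colg := fun g => exists au, g = fun w => F2 w au.
Definition Sg := fun g => exists ws, g = rho_mono A ws.

Lemma step1 n : has_dim n (birec_closure A) <-> has_dim n (Defs.span C2g).
Proof.
have H1 : forall g, C2g g -> Defs.span BG g.
  move=> g [[u x] ->]; apply: single; exists x, (wrev u).
  by apply: functional_extensionality => w; rewrite /lambda /rho wrevK.
have H2 : forall g, BG g -> Defs.span C2g g.
  move=> g [w [w' ->]]; apply: single; by exists (wrev w', w).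
split => H; first exact: (transfer H).
exact: (transfer H).
Qed.

Lemma step2 n : has_dim n (Defs.span C2g) <-> has_dim n (Defs.span Colg).
Proof.
have H1 : forall g, Colg g -> Defs.span C2g g.
  move=> g [[[a Ha] u] ->].
  have Ha' := Ha; case: Ha' => [m [c [b [Hb Ea]]]].
  exists m, c, (fun i w => b i (wcat u w)); split.
    by move=> i; case: (Hb i) => x ->; exists (u, x).
  by apply: functional_extensionality => w; rewrite /F2 /= Ea.
have H2 : forall g, C2g g -> Defs.span Colg g.
  move=> g [[u x] ->]; apply: single.
  have Hr : rec_closure A (rho x A) by apply: single; exists x.
  by exists (exist _ (rho x A) Hr, u).
split => H; first exact: (transfer H).
exact: (transfer H).
Qed.

Lemma step3 n : has_dim n (Defs.span Colg) <-> has_dim n (Defs.span Rowg).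
Proof.
split => H; last exact: (@dual K W (recElt A * W) F2 n H).
exact: (@dual K (recElt A * W) W (fun j i => F2 i j) n H).
Qed.

Lemma step4 n : has_dim n (Defs.span Rowg) <-> has_dim n (shift_algebra A).
Proof.
have H1 : forall g, Rowg g -> Defs.span Sg g.
  by move=> g [w ->]; apply: single; exists [:: w].
have H2 : forall g, Sg g -> Defs.span Rowg g.
  move=> g [ws ->]; apply: single; exists (wconcat ws).
  apply: functional_extensionality => au; by rewrite /rho_mono foldr_rho.
split => H; first exact: (transfer H).
exact: (transfer H).
Qed.

Lemma part2 n : has_dim n (birec_closure A) ->
        exists m : nat, (m <= n)%N /\ has_dim m (rec_closure A).
Proof.
move=> [b [_ _ Sb]].
apply: (L1 (f := b)) => g [w ->]; apply: Sb; apply: single.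
exists w, (wnil p q).
by apply: functional_extensionality => u; rewrite /lambda wrev0 wcat0w.
Qed.

Lemma part3 m : has_dim m (rec_closure A) ->
        exists n : nat, (n <= m ^ 2)%N /\ has_dim n (birec_closure A).
Proof.
move=> [b [Hbrec Hbind Hbspan]].
have [C HC] : exists C : W * 'I_m -> 'I_m -> K,
    forall ui, rho ui.1 (b ui.2) = lincomb (C ui) b.
  apply: (choice_fin (P := fun ui c => rho ui.1 (b ui.2) = lincomb c b)) => ui.
  by apply: Hbspan; apply: rec_rho.
pose fam := fun t : 'I_m * 'I_m => fun u : W => C (u, t.1) t.2.
have [n [len Hn]] : exists n, (n <= #|{: 'I_m * 'I_m}|)%N /\ has_dim n (Defs.span BG).
  apply: (@L1 K W #|{: 'I_m * 'I_m}| (fun k => fam (enum_val k)) BG).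
  move=> g [w [w' ->]].
  have [e He] : exists e, rho w A = lincomb e b.
    by apply: Hbspan; apply: single; exists w.
  exists (fun k => e (enum_val k).1 * b (enum_val k).2 (wrev w')).
  apply: functional_extensionality => u.
  rewrite /lambda He /lincomb.
  transitivity (\sum_(t : 'I_m * 'I_m) e t.1 * b t.2 (wrev w') * fam t u); last first.
    rewrite (eq_bigl (fun t => t \in {: 'I_m * 'I_m})) // big_enum_val.
    by apply: eq_bigr.
  transitivity (\sum_i \sum_j e i * b j (wrev w') * fam (i, j) u); last first.
    by rewrite pair_bigA; apply: eq_bigr => [[i j]] _.
  apply: eq_bigr => i _.
  have := congr1 (fun h => h (wrev w')) (HC (u, i)); rewrite /= /rho /lincomb => ->.
  rewrite big_distrr /=; apply: eq_bigr => j _.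
  by rewrite /fam /= mulrAC mulrA.
exists n; split => //.
rewrite card_prod !card_ord in len; by rewrite expnS expn1.
Qed.
End Main.

Theorem mainTheorem14 (K : fieldType) (p q : nat) (A : series K p q) :
  (* dim birec(A) = dim K[rho_calA(M)]  (in N u {oo}) *)
  (forall n : nat, has_dim n (birec_closure A) <-> has_dim n (shift_algebra A))
  (* dim rec(A) <= dim birec(A) *)
  /\ (forall n : nat, has_dim n (birec_closure A) ->
        exists m : nat, (m <= n)%N /\ has_dim m (rec_closure A))
  (* dim birec(A) <= (dim rec(A))^2 *)
  /\ (forall m : nat, has_dim m (rec_closure A) ->
        exists n : nat, (n <= m ^ 2)%N /\ has_dim n (birec_closure A)).
Proof.
split; last split.
- move=> n; rewrite step1 step2 step3; exact: step4.
- exact: part2.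
- exact: part3.
Qed.
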